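(* For every integer $n\geq 16$ there exists a graph $G$ on $n+1$ vertices with $r(G) > \frac{1}{3} n\log n$, together with a vertex $v\in V(G)$ such that the graph $H = G\setminus\{v\}$ obtained by deleting $v$ satisfies $r(H) = n$.
   Context: For a graph $F$, the Ramsey number $r(F)$ is the minimum $N$ such that every two-coloring of the edges of the complete graph $K_N$ contains a monochromatic copy of $F$. All logarithms are to base $2$. *)

(* Defs.v *)
From Stdlib Require Import Reals.
From mathcomp Require Import all_boot.

Set Implicit Arguments.
Unset Strict Implicit.
Unset Printing Implicit Defensive.

Definition simple_graph (V : finType) (e : rel V) : Prop :=
  symmetric e /\ irreflexive e.

(* A two-colouring of the edges of K_N: each 2-subset {x,y} of 'I_N
   gets a colour in bool. *)
Definition coloring (N : nat) := {set 'I_N} -> bool.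

Definition mono_copy (V : finType) (e : rel V) (N : nat) (c : coloring N)
  (b : bool) : Prop :=
  exists f : V -> 'I_N, injective f /\
    forall u w : V, e u w -> c [set f u; f w] = b.

Definition ramsey_prop (V : finType) (e : rel V) (N : nat) : Prop :=
  forall c : coloring N, exists b : bool, mono_copy e c b.

Definition is_ramsey_number (V : finType) (e : rel V) (r : nat) : Prop :=
  ramsey_prop e r /\ forall m : nat, m < r -> ~ ramsey_prop e m.

Definition del_vertex_rel (V : finType) (e : rel V) (v : V) :
  rel {x : V | x != v} := fun x y => e (val x) (val y).
Arguments del_vertex_rel {V} e v _ _.

Definition log2 (x : R) : R := Rdiv (ln x) (ln 2).

(* Main.v *)
Require Import Defs.
From Stdlib Require Import Reals Lra Classical.
From mathcomp Require Import all_boot zify.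
Set Implicit Arguments. Unset Strict Implicit.
Definition monoS (T : finType) (c : {set T} -> bool) (b : bool) (S : {set T}) :=
  forall i j, i \in S -> j \in S -> i != j -> c [set i; j] = b.

Lemma ramsey_aux (T : finType) (c : {set T} -> bool) : forall m a b (A : {set T}),
  a + b = m -> 2 ^ (a + b) <= #|A| ->
  exists S : {set T}, S \subset A /\ ((a < #|S| /\ monoS c true S) \/ (b < #|S| /\ monoS c false S)).
Proof.
elim=> [|m IH] a b A Hab HA.
  have a0 : a = 0 by lia.
  have : 0 < #|A| by move: HA; rewrite Hab; lia.
  rewrite card_gt0 => /set0Pn [x xA].
  exists [set x]; split; first by rewrite sub1set.
  left; rewrite cards1 a0; split=> // i j; rewrite !in_set1 => /eqP-> /eqP->; by rewrite eqxx.
have : 0 < #|A| by apply: leq_trans HA; rewrite expn_gt0.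
rewrite card_gt0 => /set0Pn [x xA].
case: a Hab HA => [|a] Hab HA.
  exists [set x]; split; first by rewrite sub1set.
  left; rewrite cards1; split=> // i j; rewrite !in_set1 => /eqP-> /eqP->; by rewrite eqxx.
case: b Hab HA => [|b] Hab HA.
  exists [set x]; split; first by rewrite sub1set.
  right; rewrite cards1; split=> // i j; rewrite !in_set1 => /eqP-> /eqP->; by rewrite eqxx.
set A' := A :\ x.
set Rx := [set y in A' | c [set x; y]].
set Bx := [set y in A' | ~~ c [set x; y]].
have cA : #|A| = #|A'|.+1 by rewrite (cardsD1 x A) xA.
have cRB : #|Rx| + #|Bx| = #|A'|.
  rewrite -(cardsID [set y | c [set x; y]] A') /Rx /Bx; congr (_ + _); apply: eq_card => y;
  rewrite !inE; by case: (y != x); case: (y \in A); case: (c [set x; y]).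
have HRx : Rx \subset A by apply/subsetP=> y; rewrite !inE => /andP[/andP[]].
have HBx : Bx \subset A by apply/subsetP=> y; rewrite !inE => /andP[/andP[]].
have xR : x \notin Rx by rewrite !inE eqxx.
have xB : x \notin Bx by rewrite !inE eqxx.
have e2 : 2 ^ (a.+1 + b.+1) = 2 ^ (a + b.+1) + 2 ^ (a.+1 + b).
  by rewrite addSn expnS addnS mul2n -addnn.
have [HR|HR] : 2 ^ (a + b.+1) <= #|Rx| \/ 2 ^ (a.+1 + b) <= #|Bx| by lia.
- have [S [SR [[aS mS]|[bS mS]]]] := IH a b.+1 Rx ltac:(lia) HR.
  + exists (x |: S); split.
      by rewrite subUset sub1set xA (subset_trans SR HRx).
    left; rewrite cardsU1 (contra (fun h => subsetP SR x h) xR); split; first by [].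
    move=> i j; rewrite !inE => /orP[/eqP->|iS] /orP[/eqP->|jS] ij.
    * by rewrite eqxx in ij.
    * by have := subsetP SR j jS; rewrite !inE => /andP[].
    * have := subsetP SR i iS; rewrite !inE => /andP[_]; by rewrite setUC.
    * exact: mS.
  + exists S; split; first exact: (subset_trans SR HRx).
    by right.
- have [S [SR [[aS mS]|[bS mS]]]] := IH a.+1 b Bx ltac:(lia) HR.
  + exists S; split; first exact: (subset_trans SR HBx).
    by left.
  + exists (x |: S); split.
      by rewrite subUset sub1set xA (subset_trans SR HBx).
    right; rewrite cardsU1 (contra (fun h => subsetP SR x h) xB); split; first by [].
    move=> i j; rewrite !inE => /orP[/eqP->|iS] /orP[/eqP->|jS] ij.
    * by rewrite eqxx in ij.
    * by have := subsetP SR j jS; rewrite !inE => /andP[_ /negbTE].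
    * have := subsetP SR i iS; rewrite !inE => /andP[_]; by rewrite setUC => /negbTE.
    * exact: mS.
Qed.

Lemma min_exists (P : nat -> Prop) N : P N -> exists r, P r /\ forall m, m < r -> ~ P m.
Proof.
elim/ltn_ind: N => N IH PN.
case: (classic (exists m, m < N /\ P m)) => [[m [mN Pm]]|H].
  exact: IH Pm.
exists N; split=> // m mN Pm; apply: H; exists m; by split.
Qed.

Lemma small_fail (V : finType) (e : rel V) m : m < #|V| -> ~ ramsey_prop e m.
Proof.
move=> Hm /(_ (fun _ => true)) [b [f [finj _]]].
have := leq_card f finj; rewrite card_ord; lia.
Qed.

Lemma embed_clique (V : finType) (e : rel V) N (c : coloring N) b (S : {set 'I_N}) :
  irreflexive e -> 0 < #|V| -> #|V| <= #|S| -> monoS c b S -> mono_copy e c b.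
Proof.
move=> irr V0 VS mS.
have : 0 < #|S| by lia.
rewrite card_gt0 => /set0Pn [x0 _].
exists (fun x => nth x0 (enum S) (enum_rank x)); split.
  move=> x y /eqP; rewrite nth_uniq ?enum_uniq // -?cardE.
  - by move=> /eqP /ord_inj /enum_rank_inj.
  - exact: leq_trans (ltn_ord _) VS.
  - exact: leq_trans (ltn_ord _) VS.
move=> u w euw; apply: mS.
- by rewrite -mem_enum mem_nth // -cardE (leq_trans (ltn_ord _) VS).
- by rewrite -mem_enum mem_nth // -cardE (leq_trans (ltn_ord _) VS).
- rewrite nth_uniq ?enum_uniq // -?cardE ?(leq_trans (ltn_ord _) VS) //.
  apply: contraTneq euw => /ord_inj /enum_rank_inj ->; by rewrite irr.
Qed.

Definition blockc (n N : nat) : coloring N :=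
  fun A => [forall i in A, forall j in A, (i : nat) %/ n == (j : nat) %/ n].

Lemma blockc2 n N (a b : 'I_N) : blockc n [set a; b] = ((a : nat) %/ n == (b : nat) %/ n).
Proof.
apply/forall_inP/eqP => [H | H].
  by have /forall_inP /(_ b (set22 a b)) /eqP := H a (set21 a b).
move=> i; rewrite !inE => /orP[]/eqP->; apply/forall_inP => j; rewrite !inE => /orP[]/eqP->;
  by rewrite ?H eqxx.
Qed.

Lemma INR_expn2 j : INR (2 ^ j) = pow 2 j.
Proof.
elim: j => [|j IH] //=; rewrite expnS -multE mult_INR IH /=; lra.
Qed.

Theorem theorem1p2 :
  forall n : nat, 16 <= n ->
    exists e : rel 'I_n.+1,
      simple_graph e /\
      (exists rG : nat, is_ramsey_number e rG /\
         Rgt (INR rG) (Rmult (Rdiv 1 3) (Rmult (INR n) (log2 (INR n))))) /\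
      exists v : 'I_n.+1, is_ramsey_number (del_vertex_rel e v) n.
Proof.
move=> n n16.
set k := (trunc_log 4 n).+1.
have Hk1 : 4 ^ k.-1 <= n by apply: trunc_logP; lia.
have Hk2 : n < 4 ^ k by apply: trunc_log_ltn.
have Hk1' : 2 ^ (k.-1 + k.-1) <= n by rewrite addnn -mul2n expnM.
have Hk2' : n < 2 ^ (k + k) by rewrite addnn -mul2n expnM.
have kn : k <= n.
  apply: leq_trans Hk1; rewrite /k /=.
  elim: (trunc_log 4 n) => [|j IH] //; rewrite expnS; lia.
have n0 : 0 < n by lia.
set e : rel 'I_n.+1 := fun x y => (x != y) &&
   [|| (x : nat) == n, (y : nat) == n | ((x : nat) < k) && ((y : nat) < k)].
have irr : irreflexive e by move=> x; rewrite /e eqxx.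
exists e.
split.
  split=> // x y; rewrite /e eq_sym; congr (_ && _).
  by case: (_ == n); case: (_ == n); case: (_ < k); case: (_ < k).
split.
  have [rG [PrG minr]] : exists r, ramsey_prop e r /\ forall m, m < r -> ~ ramsey_prop e m.
    apply: (@min_exists _ (2 ^ (n + n))) => c.
    have [|S [_ [[aS mS]|[bS mS]]]] := @ramsey_aux _ c (n + n) n n setT (erefl _).
    - by rewrite cardsT card_ord.
    - exists true; apply: (embed_clique irr) mS; rewrite card_ord //.
    - exists false; apply: (embed_clique irr) mS; rewrite card_ord //.
  have lower : forall m, m <= k * n -> ~ ramsey_prop e m.
    move=> m mkn /(_ (@blockc n m)) [[|] [f [finj fe]]].
    - have blk : forall x, (f x : nat) %/ n = (f ord_max : nat) %/ n.
        move=> x; case: (eqVneq x ord_max) => [->//|xm].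
        apply/eqP; rewrite -blockc2; apply: fe.
        by rewrite /e xm /= eqxx orbT.
      pose h x := Ordinal (ltn_pmod (f x) n0).
      have hinj : injective h.
        move=> x y /(congr1 val) /= hxy; apply: finj; apply: val_inj => /=.
        by rewrite (divn_eq (f x) n) (divn_eq (f y) n) hxy !blk.
      by have := leq_card h hinj; rewrite !card_ord ltnn.
    - pose w (j : 'I_k.+1) : 'I_n.+1 := inord (if (j : nat) < k then (j : nat) else n).
      have wv : forall j, (w j : nat) = if (j : nat) < k then (j : nat) else n.
        move=> j; rewrite inordK //; case: ifP => //; lia.
      have hlt : forall j, (f (w j) : nat) %/ n < k.
        move=> j; rewrite ltn_divLR //; exact: leq_trans (ltn_ord _) mkn.
      pose h j := Ordinal (hlt j).
      have hinj : injective h.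
        move=> j1 j2 /(congr1 val) /= /eqP hj; apply/eqP; apply: contraTT hj => j12.
        have E : e (w j1) (w j2).
          rewrite /e -(inj_eq val_inj) /= !wv.
          have : (j1 : nat) != j2 by [].
          case: (ltnP j1 k) => h1; case: (ltnP j2 k) => h2 /= ne; apply/andP; split; try exact: ne; try lia.
          have e12 : j1 = j2 by apply: val_inj; have := ltn_ord j1; have := ltn_ord j2; rewrite /=; lia.
          by rewrite e12 eqxx in ne.
        by have := fe _ _ E; rewrite blockc2 => ->.
      by have := leq_card h hinj; rewrite !card_ord ltnn.
  have rgt : k * n < rG.
    case: (leqP rG (k * n)) => // H; by case: (lower _ H).
  exists rG; split; first by split.
  have Hn : Rlt 0 (INR n) by apply: lt_0_INR; apply/ltP.
  have HnR : Rlt (INR n) (pow 2 (k + k)) by rewrite -INR_expn2; apply: lt_INR; apply/ltP.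
  have ln2 : Rlt 0 (ln 2) by rewrite -ln_1; apply: ln_increasing; lra.
  have Hlog : Rlt (log2 (INR n)) (Rmult 2 (INR k)).
    rewrite /log2; apply: (Rmult_lt_reg_r (ln 2)) => //.
    have -> : Rmult (Rdiv (ln (INR n)) (ln 2)) (ln 2) = ln (INR n) by field; lra.
    have := ln_increasing _ _ Hn HnR; rewrite ln_pow; last lra.
    rewrite plus_INR; lra.
  have Hr : Rle (Rplus (Rmult (INR k) (INR n)) 1) (INR rG).
    rewrite -mult_INR -S_INR; apply: le_INR; apply/leP; rewrite multE; exact: rgt.
  have := Rmult_lt_compat_l (INR n) _ _ Hn Hlog.
  have E : Rmult (INR n) (Rmult 2 (INR k)) = Rmult 2 (Rmult (INR k) (INR n)) by ring.
  have P : Rle 0 (Rmult (INR k) (INR n)) by apply: Rmult_le_pos; apply: pos_INR.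
  rewrite /Rdiv; lra.
exists ord_max.
have vx : forall x : {x : 'I_n.+1 | x != ord_max}, (val x : nat) < n.
  move=> [x /= xn]; have := ltn_ord x; move: xn; rewrite -val_eqE /=; lia.
split; last first.
  move=> m mn; apply: small_fail; rewrite card_sig.
  have E : #|[pred x : 'I_n.+1 | x != ord_max]| = n.
    rewrite (@eq_card _ _ (predC1 ord_max)) => [|x]; last by [].
    by rewrite cardC1 card_ord.
  by rewrite E.
move=> c.
have x0 : 'I_n := Ordinal n0.
have emb : forall b (S : {set 'I_n}), k.-1 < #|S| -> monoS c b S ->
    mono_copy (del_vertex_rel e ord_max) c b.
  move=> b S kS mS.
  set s := enum S ++ enum (~: S).
  have ss : size s = n by rewrite size_cat -!cardE cardsC card_ord.
  have us : uniq s.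
    rewrite cat_uniq !enum_uniq /= andbT; apply/hasPn => x.
    by rewrite !mem_enum inE.
  exists (fun x : {x : 'I_n.+1 | x != ord_max} => nth x0 s (val (val x))); split.
    move=> x y /eqP; rewrite nth_uniq ?ss ?vx // => /eqP /val_inj /val_inj //.
  move=> u w; rewrite /del_vertex_rel /e => /andP [uw H].
  move: H; rewrite (ltn_eqF (vx u)) (ltn_eqF (vx w)) /= => /andP [uk wk].
  have kS' : k <= #|S| by lia.
  apply: mS.
  - rewrite /s nth_cat -cardE (leq_trans uk kS') -mem_enum; apply: mem_nth.
    by rewrite -cardE (leq_trans uk kS').
  - rewrite /s nth_cat -cardE (leq_trans wk kS') -mem_enum; apply: mem_nth.
    by rewrite -cardE (leq_trans wk kS').
  - by rewrite nth_uniq ?ss ?vx.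
have [|S [_ [[aS mS]|[bS mS]]]] := @ramsey_aux _ c (k.-1 + k.-1) k.-1 k.-1 setT (erefl _).
- by rewrite cardsT card_ord.
- by exists true; apply: (emb _ S).
- by exists false; apply: (emb _ S).
Qed.
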